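(* Let $R,\mu$ be positive integers with $\mu<R$, $D=\gcd(R,\mu)$, and assume (as holds in each case below) that $D\ge2$ is prime and that under $G_{R,\mu}$ the ring $\mathbb Z_R$ has exactly two orbits $\{\lambda:\lambda\equiv0\pmod D\}$ and its complement. Then (with $t$ an integer): (i) If $R=3t\ge6$, $\mu=3$ ($D=3$): $\mathrm P^+_{R,3}(0)=\frac13\left(\binom{R-1}{2}-1\right)+1$, $\mathrm P^+_{R,3}(1)=\frac13\left(\binom{R-1}{2}-1\right)$. (ii) If $R=4t+2\ge6$, $\mu=4$ ($D=2$): $\mathrm P^+_{R,4}(0)=\frac14\left(\binom{R-1}{3}+\frac{R-2}{2}\right)$, $\mathrm P^+_{R,4}(1)=\frac14\left(\binom{R-1}{3}-\frac{R-2}{2}\right)$. (iii) If $R=5t\ge10$, $\mu=5$ ($D=5$): $\mathrm P^+_{R,5}(0)=\frac15\left(\binom{R-1}{4}-1\right)+1$, $\mathrm P^+_{R,5}(1)=\frac15\left(\binom{R-1}{4}-1\right)$. (iv) If $\mu=6$ and either $R\equiv2\pmod6$, $R\ge8$, or $R\equiv4\pmod6$, $R\ge10$ ($D=2$): $\mathrm P^+_{R,6}(0)=\frac16\left(\binom{R-1}{5}-\binom{R/2-1}{2}\right)$, $\mathrm P^+_{R,6}(1)=\frac16\left(\binom{R-1}{5}+\binom{R/2-1}{2}\right)$. (v) If $R=6t+3\ge9$, $\mu=6$ ($D=3$): $\mathrm P^+_{R,6}(0)=\frac13\left(\frac12\binom{R-1}{5}+\frac{R-3}{3}\right)$, $\mathrm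 P^+_{R,6}(1)=\frac16\left(\binom{R-1}{5}-\frac{R-3}{3}\right)$. (vi) If $R=7t\ge14$, $\mu=7$ ($D=7$): $\mathrm P^+_{R,7}(0)=\frac17\left(\binom{R-1}{6}-1\right)+1$, $\mathrm P^+_{R,7}(1)=\frac17\left(\binom{R-1}{6}-1\right)$. (vii) If $R=4t+6\ge10$, $\mu=8$ ($D=2$): $\mathrm P^+_{R,8}(0)=\frac18\left(\binom{R-1}{7}+\binom{R/2-1}{3}\right)$, $\mathrm P^+_{R,8}(1)=\frac18\left(\binom{R-1}{7}-\binom{R/2-1}{3}\right)$. (viii) If $\mu=9$ and either $R=9t+3\ge12$ or $R=9t+6\ge15$ ($D=3$): $\mathrm P^+_{R,9}(0)=\frac19\left(\binom{R-1}{8}+2\binom{R/3-1}{2}\right)$, $\mathrm P^+_{R,9}(1)=\frac19\left(\binom{R-1}{8}-\binom{R/3-1}{2}\right)$. Moreover, in every case $\mathrm P^+_{R,\mu}(\lambda)=\mathrm P^+_{R,\mu}(0)$ when $\lambda\equiv0\pmod D$ and $\mathrm P^+_{R,\mu}(\lambda)=\mathrm P^+_{R,\mu}(1)$ otherwise.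
   Context: $\mathbb Z_R$ is the ring of integers modulo $R$ and $\mathbb Z_R^*$ its units; $\mathrm P^+_{R,\mu}(\lambda)$ is the number of $\mu$-element subsets of $\mathbb Z_R$ (distinct elements) whose sum in $\mathbb Z_R$ is $\lambda$. $G_{R,\mu}$ is the group of maps $\lambda\mapsto\lambda\ell+u\mu$ on $\mathbb Z_R$ with $\ell\in\mathbb Z_R^*$, $u\in\{0,\dots,R-1\}$; orbits are the equivalence classes of ''$\lambda_2=\lambda_1\varphi$ for some $\varphi\in G_{R,\mu}$''. *)

(* Defs.v *)
From mathcomp Require Import all_boot all_order all_algebra.
Set Implicit Arguments. Unset Strict Implicit. Unset Printing Implicit Defensive.
Import Order.TTheory GRing.Theory Num.Theory.

Definition Pplus (R mu lam : nat) : nat :=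
  #|[set A : {set 'I_R} | (#|A| == mu) &&
       ((\sum_(i in A) (i : nat)) %% R == lam %% R)]|.

(* lam2 = lam1 phi for some phi in G_{R,mu}: phi(lam) = lam*l + u*mu with
   l in Z_R^* and u in {0,...,R-1}. *)
Definition G_rel (R mu : nat) (l1 l2 : 'I_R) : Prop :=
  exists l u : nat, [/\ l < R, coprime l R, u < R &
     (l2 : nat) = (l1 * l + u * mu) %% R].

Definition two_orbits (R mu : nat) : Prop :=
  forall l1 l2 : 'I_R,
    G_rel mu l1 l2 <-> ((gcdn R mu %| l1) = (gcdn R mu %| l2)).

(* Main.v *)
Require Import Defs.
From mathcomp Require Import all_boot all_order all_algebra.
From mathcomp Require Import zify lra.
Import Order.TTheory GRing.Theory Num.Theory.

Lemma card_inj_le (T : finType) (P Q : pred {set T}) (F : {set T} -> {set T}) :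
  {in [set A | P A] &, injective F} -> (forall A, P A -> Q (F A)) ->
  #|[set A | P A]| <= #|[set A | Q A]|.
Proof.
move=> inj PQ; rewrite -(card_in_imset inj); apply: subset_leq_card.
apply/subsetP => B /imsetP [A]; rewrite inE => PA ->; rewrite inE; exact: PQ.
Qed.

Lemma mod_cancel l R x y : coprime l R -> x * l = y * l %[mod R] -> x = y %[mod R].
Proof.
move=> cop.
wlog le : x y / y <= x => [H|].
  case: (leqP y x) => h; first exact: H.
  move=> e; apply/esym; apply: H; [exact: ltnW | by []].
move/eqP; rewrite eqn_mod_dvd ?leq_mul2r ?le ?orbT // -mulnBl.
rewrite Gauss_dvdl; last by rewrite coprime_sym.
by rewrite -eqn_mod_dvd // => /eqP.
Qed.

Lemma sum_imset_mod (R : nat) (f : 'I_R -> 'I_R) (A : {set 'I_R}) :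
  injective f -> \sum_(i in f @: A) (i : nat) = \sum_(x in A) (f x : nat).
Proof. by move=> inj; rewrite big_imset //; move=> x y _ _; apply: inj. Qed.

Lemma Pplus_G R mu (l1 l2 : 'I_R) : G_rel mu l1 l2 -> Pplus R mu l1 <= Pplus R mu l2.
Proof.
case=> l [u [hl hc hu e]].
have R0 : 0 < R by apply: leq_ltn_trans (ltn_ord l1).
pose phi (x : 'I_R) : 'I_R := Ordinal (ltn_pmod (x * l + u) R0).
have inj : injective phi.
  move=> x y /(congr1 val) /= /eqP; rewrite eqn_modDr => /eqP /(mod_cancel _ _ _ _ hc).
  by rewrite !modn_small // => /val_inj.
apply: (@card_inj_le _ _ _ (fun A => phi @: A)); first by move=> A B _ _; apply: (imset_inj inj).
move=> A /andP [/eqP cA /eqP sA]; apply/andP; split.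
  by rewrite card_imset // cA.
rewrite sum_imset_mod // e modn_mod; apply/eqP.
have -> : \sum_(x in A) (phi x : nat) = \sum_(x in A) ((x * l + u) %% R) by [].
rewrite modn_summ big_split /= -big_distrl /= sum_nat_const cA.
by rewrite -modnDml -modnMml sA modnMml modnDml (mulnC mu).
Qed.


Lemma sum_blocks D s (F : nat -> nat) :
  \sum_(0 <= i < s * D) F i = \sum_(0 <= q < s) \sum_(0 <= t < D) F (q * D + t).
Proof.
elim: s => [|s IH]; first by rewrite mul0n !big_geq.
rewrite big_nat_recr //= -IH mulSnr (@big_cat_nat _ _ _ (s * D)) ?leq_addr //=.
congr (_ + _).
rewrite -{1}(add0n (s * D)) big_addn addKn.
by apply: eq_bigr => i _; rewrite addnC.
Qed.

Lemma count_res D s r : r < D ->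
  \sum_(0 <= i < s * D) (i %% D == r) = s.
Proof.
move=> rD; rewrite sum_blocks.
transitivity (\sum_(0 <= q < s) 1); last by rewrite sum_nat_const_nat subn0 muln1.
apply: eq_bigr => q _.
rewrite big_mkord (eq_bigr (fun t : 'I_D => (t == r :> nat) : nat)); last first.
  by move=> t _; rewrite modnMDl modn_small.
rewrite (bigD1 (Ordinal rD)) //= eqxx big1 // => i /negbTE ne.
by rewrite -(inj_eq val_inj) /= in ne; rewrite ne.
Qed.

Lemma count_fib D s p : 0 < D -> p < s ->
  \sum_(0 <= i < s * D) (i %/ D == p) = D.
Proof.
move=> D0 ps; rewrite sum_blocks.
rewrite (eq_bigr (fun q => (q == p) * D)); last first.
  move=> q _; rewrite big_mkord (eq_bigr (fun t => (q == p) : nat)).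
    by rewrite sum_nat_const card_ord mulnC.
  by move=> t _; rewrite divnMDl // divn_small // addn0.
rewrite big_mkord (bigD1 (Ordinal ps)) //= eqxx mul1n big1 ?addn0 // => i /negbTE ne.
by rewrite -(inj_eq val_inj) /= in ne; rewrite ne.
Qed.


Definition rotv D q k x := if x %/ D == q then q * D + (x %% D + k) %% D else x.
Definition brot R D q k (x : 'I_R) : 'I_R := insubd x (rotv D q k x).
Definition cnt R D q (A : {set 'I_R}) := \sum_(x in A) (x %/ D == q : nat).
Definition ssum R (A : {set 'I_R}) := \sum_(x in A) (x : nat).
Arguments brot {R} D q k x.
Arguments cnt {R} D q A.
Arguments ssum {R} A.

Lemma rotv_div D q k x : 0 < D -> rotv D q k x %/ D = x %/ D.
Proof.
move=> D0; rewrite /rotv; case: eqP => // <-.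
have h : (x %% D + k) %% D < D by rewrite ltn_mod.
by rewrite divnMDl // (divn_small h) addn0.
Qed.

Lemma rotv_mod D q k x : rotv D q k x %% D = (x + k * (x %/ D == q)) %% D.
Proof.
rewrite /rotv; case: eqP => _; last by rewrite muln0 addn0.
by rewrite modnMDl modn_mod muln1 modnDml.
Qed.

Lemma rotv_inj D q k : 0 < D -> injective (rotv D q k).
Proof.
move=> D0 x y e.
have ed : x %/ D = y %/ D by rewrite -(rotv_div D q k x D0) -(rotv_div D q k y D0) e.
rewrite (divn_eq x D) (divn_eq y D) ed; congr (_ + _).
move: e; rewrite /rotv -ed; case: eqP => _; last by move->.
move/eqP.
rewrite eqn_add2l => /eqP e.
have : x %% D + k == y %% D + k %[mod D] by apply/eqP.
by rewrite eqn_modDr !modn_mod => /eqP.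
Qed.

Lemma rotv_lt R D q k x : 0 < D -> D %| R -> x < R -> rotv D q k x < R.
Proof.
move=> D0 hR xR; rewrite /rotv; case: eqP => // <-.
apply: (@leq_trans ((x %/ D).+1 * D)).
  by rewrite mulSnr ltn_add2l ltn_mod.
by rewrite -leq_divRL // ltn_divLR // divnK.
Qed.

Lemma val_rot R D q k (x : 'I_R) : 0 < D -> D %| R -> val (brot D q k x) = rotv D q k x.
Proof. by move=> D0 hR; rewrite val_insubd rotv_lt. Qed.

Lemma brot_inj R D q k : 0 < D -> D %| R -> injective (@brot R D q k).
Proof.
move=> D0 hR x y /(congr1 val); rewrite !val_rot // => /rotv_inj -/(_ D0) e.
exact: val_inj.
Qed.

Lemma cnt_rot R D p q k (A : {set 'I_R}) : 0 < D -> D %| R ->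
  cnt D p (brot D q k @: A) = cnt D p A.
Proof.
move=> D0 hR; rewrite /cnt big_imset /=; last by move=> x y _ _; apply: brot_inj.
by apply: eq_bigr => x _; rewrite val_rot // rotv_div.
Qed.

Lemma sig_rot R D q k (A : {set 'I_R}) : 0 < D -> D %| R ->
  ssum (brot D q k @: A) %% D = (ssum A + k * cnt D q A) %% D.
Proof.
move=> D0 hR; rewrite /ssum big_imset /=; last by move=> x y _ _; apply: brot_inj.
rewrite -modn_summ (eq_bigr (fun x : 'I_R => (x + k * (x %/ D == q)) %% D)); last first.
  by move=> x _; rewrite val_rot // rotv_mod.
by rewrite modn_summ big_split /= /cnt big_distrr.
Qed.

Definition kk D d a := odflt 0 (omap val [pick k : 'I_D | k * a %% D == d %% D]).

Lemma kk_spec D d a : prime D -> 0 < a < D -> (kk D d a * a) %% D = d %% D.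
Proof.
move=> pD /andP [a0 aD].
have D0 : 0 < D by apply: prime_gt0.
have cop : coprime a D.
  by rewrite coprime_sym prime_coprime //; apply/negP => /(dvdn_leq a0); rewrite leqNgt aD.
pose f (k : 'I_D) : 'I_D := Ordinal (ltn_pmod (k * a) D0).
have finj : injective f.
  move=> x y /(congr1 val) /= /(mod_cancel _ _ _ _ cop).
  by rewrite !modn_small // => /val_inj.
have := inj_card_onto finj (leqnn _) (Ordinal (ltn_pmod d D0)).
case/codomP => k /(congr1 val) /= e.
rewrite /kk; case: pickP => [k' /eqP //|/(_ k)].
by rewrite -e eqxx.
Qed.


Definition full R D (A : {set 'I_R}) := [forall q : 'I_(R %/ D), ~~ (0 < cnt D q A < D)].
Arguments full {R} D A.
Definition pq R D (A : {set 'I_R}) := [pick q : 'I_(R %/ D) | 0 < cnt D q A < D].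
Arguments pq {R} D A.
Definition Phi R D (d : nat) (A : {set 'I_R}) : {set 'I_R} :=
  if pq D A is Some q then [set brot D (q : nat) (kk D d (cnt D (q : nat) A)) x | x in A] else A.
Arguments Phi {R} D d A.
Definition Nset R D mu r :=
  [set A : {set 'I_R} | [&& #|A| == mu, ssum A %% D == r & ~~ full D A]].

Lemma cnt_Phi R D d p (A : {set 'I_R}) : 0 < D -> D %| R ->
  cnt D p (Phi D d A) = cnt D p A.
Proof. by move=> D0 hR; rewrite /Phi; case: (pq D A) => // q; rewrite cnt_rot. Qed.

Lemma pq_Phi R D d (A : {set 'I_R}) : 0 < D -> D %| R -> pq D (Phi D d A) = pq D A.
Proof. by move=> D0 hR; rewrite /pq; apply: eq_pick => q; rewrite cnt_Phi. Qed.

Lemma nfull_pq R D (A : {set 'I_R}) : ~~ full D A ->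
  exists2 q, pq D A = Some q & 0 < cnt D q A < D.
Proof.
rewrite /full /pq; case: pickP => [q hq _|none]; first by exists q.
by move/forallPn => [q]; rewrite none.
Qed.

Lemma N_le R D mu r r' : prime D -> D %| R -> r < D -> r' < D ->
  #|Nset R D mu r| <= #|Nset R D mu r'|.
Proof.
move=> pD hR rD r'D; have D0 : 0 < D by apply: prime_gt0.
rewrite /Nset; apply: (@card_inj_le _ _ _ (Phi D (r' + D - r))).
  move=> A B; rewrite !inE => /and3P [_ _ /(nfull_pq _ _ _) [q qA _]] /and3P [_ _ /(nfull_pq _ _ _) [q' qB _]] e.
  have eq : Some q = Some q'.
    by rewrite -qA -qB -(pq_Phi _ _ (r' + D - r) A D0 hR) -(pq_Phi _ _ (r' + D - r) B D0 hR) e.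
  case: eq qB => <- qB.
  have ec : cnt D q A = cnt D q B.
    by rewrite -(cnt_Phi _ _ (r' + D - r) q A D0 hR) -(cnt_Phi _ _ (r' + D - r) q B D0 hR) e.
  move: e; rewrite /Phi qA qB ec.
  apply: imset_inj; exact: (brot_inj _ _ _ _ D0 hR).
move=> A /and3P [/eqP cA /eqP sA nf].
have [q qA hq] := nfull_pq _ _ _ nf.
apply/and3P; split.
- by rewrite /Phi qA card_imset ?cA //; exact: (brot_inj _ _ _ _ D0 hR).
- rewrite /Phi qA sig_rot // -modnDm sA (kk_spec _ _ _ pD hq) modnDmr subnKC.
    by rewrite modnDr modn_small.
  by apply: ltnW; apply: ltn_addl.
- apply/negP => /forallP fl; move: (fl q); by rewrite cnt_Phi // hq.
Qed.


Definition blk R D (Q : {set 'I_(R %/ D)}) : {set 'I_R} :=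
  [set x : 'I_R | [exists q in Q, x %/ D == val q]].
Definition Qof R D (A : {set 'I_R}) : {set 'I_(R %/ D)} :=
  [set q : 'I_(R %/ D) | cnt D q A != 0].
Definition Fall R D mu := [set A : {set 'I_R} | (#|A| == mu) && full D A].
Arguments Qof {R} D A.
Arguments blk {R} D Q.

Lemma card_sum_cond (T : finType) (A : {set T}) (P : pred T) :
  #|[set x in A | P x]| = \sum_(x in A) (P x : nat).
Proof.
rewrite -sum1_card big_mkcond [RHS]big_mkcond /=.
by apply: eq_bigr => x _; rewrite !inE; case: (x \in A); case: (P x).
Qed.

Lemma cnt_card R D q (A : {set 'I_R}) : cnt D q A = #|[set x in A | x %/ D == q]|.
Proof. by rewrite card_sum_cond. Qed.

Lemma fib_card R D q : 0 < D -> D %| R -> q < R %/ D ->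
  #|[set x : 'I_R | x %/ D == q]| = D.
Proof.
move=> D0 hR qs.
have -> : [set x : 'I_R | x %/ D == q] = [set x in [set: 'I_R] | x %/ D == q].
  by apply/setP => x; rewrite !inE.
rewrite card_sum_cond.
rewrite (eq_bigl (fun _ => true)); last by move=> x; rewrite inE.
rewrite -(big_mkord (fun _ => true) (fun i => (i %/ D == q : nat))).
by rewrite -{1}(divnK hR) (count_fib D (R %/ D) q D0 qs).
Qed.

Lemma cnt_le R D q (A : {set 'I_R}) : 0 < D -> D %| R -> q < R %/ D -> cnt D q A <= D.
Proof.
move=> D0 hR qs; rewrite cnt_card.
apply: (@leq_trans #|[set x : 'I_R | x %/ D == q]|); last by rewrite fib_card.
by apply: subset_leq_card; apply/subsetP => x; rewrite !inE => /andP [].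
Qed.

Lemma full_fib R D (A : {set 'I_R}) (q : 'I_(R %/ D)) : 0 < D -> D %| R ->
  full D A -> cnt D q A != 0 -> [set x : 'I_R | x %/ D == q] \subset A.
Proof.
move=> D0 hR /forallP /(_ q) fl nz.
have eD : cnt D q A = D.
  apply/eqP; rewrite eqn_leq cnt_le //=; move: fl; rewrite lt0n nz /=.
  by rewrite -leqNgt.
have sub : [set x in A | x %/ D == q] \subset [set x : 'I_R | x %/ D == q].
  by apply/subsetP => x; rewrite !inE => /andP [].
have := geq_leqif (subset_leqif_card sub); rewrite -cnt_card eD fib_card // leqnn.
move=> /esym sub2; apply/subsetP => x xf.
by have := subsetP sub2 x xf; rewrite inE => /andP [].
Qed.

Lemma full_blk R D (A : {set 'I_R}) : 0 < D -> D %| R -> full D A -> A = blk D (Qof D A).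
Proof.
move=> D0 hR fA; apply/setP => x; rewrite !inE; apply/idP/existsP.
  move=> xA.
  have xs : x %/ D < R %/ D by rewrite ltn_divLR // divnK.
  exists (Ordinal xs); rewrite inE /= eqxx andbT cnt_card -lt0n card_gt0.
  by apply/set0Pn; exists x; rewrite !inE xA /=.
case=> q /andP []; rewrite inE => nz /eqP xq.
by apply: (subsetP (full_fib R D A q D0 hR fA nz)); rewrite inE xq.
Qed.

Lemma cnt_blk R D (Q : {set 'I_(R %/ D)}) (p : 'I_(R %/ D)) : 0 < D -> D %| R ->
  cnt D p (blk D Q) = (p \in Q) * D.
Proof.
move=> D0 hR; rewrite cnt_card.
case: (boolP (p \in Q)) => pQ.
  rewrite mul1n; transitivity #|[set x : 'I_R | x %/ D == p]|; last by rewrite fib_card.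
  apply: eq_card => x.
  rewrite !inE; case: eqP => /= xp; rewrite ?andbT ?andbF //; apply/existsP; exists p.
  by rewrite pQ xp eqxx.
rewrite mul0n; apply/eqP; rewrite cards_eq0; apply/eqP/setP => x; rewrite !inE.
apply/negP => /andP [/existsP [q /andP [qQ /eqP xq]] /eqP xp].
have : q = p by apply: val_inj; rewrite /= -xq xp.
by move=> e; rewrite -e qQ in pQ.
Qed.

Lemma card_cnt R D (A : {set 'I_R}) : 0 < D -> D %| R ->
  #|A| = \sum_(p : 'I_(R %/ D)) cnt D p A.
Proof.
move=> D0 hR; rewrite /cnt exchange_big /= -sum1_card; apply: eq_bigr => x _.
have xs : x %/ D < R %/ D by rewrite ltn_divLR // divnK.
rewrite (bigD1 (Ordinal xs)) //= eqxx big1 // => p /negbTE ne.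
have : (x %/ D == p) = false.
  apply/negbTE; apply/negP => /eqP e; move: ne; rewrite -(inj_eq val_inj) /= e eqxx.
  by [].
by move->.
Qed.

Lemma card_blk R D (Q : {set 'I_(R %/ D)}) : 0 < D -> D %| R ->
  #|blk D Q| = #|Q| * D.
Proof.
move=> D0 hR; rewrite (card_cnt R D _ D0 hR).
rewrite (eq_bigr (fun p => (p \in Q) * D)); last by move=> p _; rewrite cnt_blk.
rewrite -big_distrl /=; congr (_ * _).
by rewrite -sum1_card [RHS]big_mkcond /=; apply: eq_bigr => p _; case: (p \in Q).
Qed.

Lemma Qof_blk R D (Q : {set 'I_(R %/ D)}) : 0 < D -> D %| R -> Qof D (blk D Q) = Q.
Proof.
move=> D0 hR; apply/setP => p; rewrite inE cnt_blk //.
by case: (p \in Q); rewrite ?mul1n ?mul0n -?lt0n ?D0.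
Qed.

Lemma full_blkQ R D (Q : {set 'I_(R %/ D)}) : 0 < D -> D %| R -> full D (blk D Q).
Proof.
move=> D0 hR; apply/forallP => p; rewrite cnt_blk //.
by case: (p \in Q); rewrite ?mul1n ?mul0n ?ltnn ?andbF.
Qed.

Lemma sum_inQ s (Q : {set 'I_s}) :
  \sum_(0 <= p < s) ([exists q in Q, p == val q] : nat) = #|Q|.
Proof.
rewrite big_mkord -sum1_card [RHS]big_mkcond /=; apply: eq_bigr => p _.
case: (boolP (p \in Q)) => pQ.
  by have -> : [exists q in Q, val p == val q] by apply/existsP; exists p; rewrite pQ eqxx.
case: existsP => // [[q /andP [qQ /eqP e]]].
have epq : p = q by apply: val_inj; rewrite /= e.
by rewrite epq qQ in pQ.
Qed.

Lemma ssum_blk R D (Q : {set 'I_(R %/ D)}) : 0 < D -> D %| R ->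
  ssum (blk D Q) %% D = (#|Q| * 'C(D, 2)) %% D.
Proof.
move=> D0 hR.
pose P' (p : nat) : nat := [exists q in Q, p == val q].
have e1 : ssum (blk D Q) = \sum_(0 <= i < R) P' (i %/ D) * i.
  rewrite /ssum big_mkcond big_mkord /=; apply: eq_bigr => x _.
  by rewrite inE /P'; case: [exists q in Q, _]; rewrite ?mul1n ?mul0n.
rewrite e1 -{1}(divnK hR) sum_blocks.
have e2 : forall p, \sum_(0 <= t < D) P' ((p * D + t) %/ D) * (p * D + t) =
    (\sum_(0 <= t < D) P' p * p) * D + P' p * 'C(D, 2).
  move=> p; rewrite -bin2_sum big_distrr big_distrl -big_split /= big_mkord [RHS]big_mkord.
  apply: eq_bigr => t _; rewrite divnMDl // divn_small // addn0.
  by rewrite mulnDr mulnA.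
rewrite (eq_bigr _ (fun p _ => e2 p)) big_split /= -big_distrl /= modnMDl.
by rewrite -big_distrl /= sum_inQ.
Qed.

Lemma Fall_eq R D mu : 0 < D -> D %| R -> D %| mu ->
  Fall R D mu = [set blk D Q | Q in [set Q : {set 'I_(R %/ D)} | #|Q| == mu %/ D]].
Proof.
move=> D0 hR hmu; apply/setP => A; rewrite inE; apply/andP/imsetP.
  case=> /eqP cA fA; exists (Qof D A); last exact: full_blk.
  rewrite inE -cA {2}(full_blk R D A D0 hR fA) card_blk // mulnK //.
case=> Q; rewrite inE => /eqP cQ ->; split; last exact: full_blkQ.
by rewrite card_blk // cQ divnK.
Qed.

Lemma card_Fall R D mu : 0 < D -> D %| R -> D %| mu ->
  #|Fall R D mu| = 'C(R %/ D, mu %/ D).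
Proof.
move=> D0 hR hmu; rewrite Fall_eq // card_in_imset; last first.
  move=> Q1 Q2 _ _ e; by rewrite -(Qof_blk R D Q1 D0 hR) e Qof_blk.
by rewrite card_draws card_ord.
Qed.

Lemma Fall_ssum R D mu A : 0 < D -> D %| R -> D %| mu -> A \in Fall R D mu ->
  ssum A %% D = (mu %/ D * 'C(D, 2)) %% D.
Proof.
move=> D0 hR hmu; rewrite Fall_eq // => /imsetP [Q]; rewrite inE => /eqP cQ ->.
by rewrite ssum_blk // cQ.
Qed.


Definition gcount R D mu r := #|[set A : {set 'I_R} | (#|A| == mu) && (ssum A %% D == r)]|.

Lemma card_part (T J : finType) (P : pred T) (h : T -> J) :
  #|[set x | P x]| = \sum_(j : J) #|[set x | P x && (h x == j)]|.
Proof.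
rewrite -sum1_card (partition_big h predT) //=; apply: eq_bigr => j _.
by rewrite -sum1_card; apply: eq_bigl => x; rewrite !inE.
Qed.

Lemma card_splitQ (T : finType) (P Q : pred T) :
  #|[set x | P x]| = #|[set x | P x && ~~ Q x]| + #|[set x | P x && Q x]|.
Proof.
rewrite -!sum1_card (bigID Q) /= addnC; congr (_ + _); apply: eq_bigl => x; rewrite !inE //.
Qed.

Lemma g_split R D mu r : 0 < D -> D %| R -> D %| mu ->
  gcount R D mu r = #|Nset R D mu r| +
     (r == (mu %/ D * 'C(D, 2)) %% D) * #|Fall R D mu|.
Proof.
move=> D0 hR hmu; rewrite /gcount (card_splitQ _ _ (full D)); congr (_ + _).
  by apply: eq_card => A; rewrite !inE andbA.
case: eqP => [->|ne].
  rewrite mul1n; apply: eq_card => A; rewrite !inE.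
  case: (boolP (full D A)) => fA; rewrite ?andbF ?andbT //.
  case: (boolP (#|A| == mu)) => cA //=.
  by rewrite (Fall_ssum R D mu A D0 hR hmu) ?eqxx // inE cA fA.
rewrite mul0n; apply/eqP; rewrite cards_eq0; apply/eqP/setP => A; rewrite !inE.
apply/negP => /andP [/andP [cA /eqP sA] fA]; apply: ne; rewrite -sA.
by rewrite (Fall_ssum R D mu A D0 hR hmu) // inE cA fA.
Qed.

Lemma g_total R D mu : 0 < D -> \sum_(r < D) gcount R D mu r = 'C(R, mu).
Proof.
move=> D0.
have := card_part _ _ (fun A : {set 'I_R} => #|A| == mu) (fun A => Ordinal (ltn_pmod (ssum A) D0)).
rewrite card_draws card_ord => ->; apply: eq_bigr => r _; rewrite /gcount.
by apply: eq_card => A; rewrite !inE.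
Qed.

Lemma g_via_P R D mu r : D %| R -> 0 < R ->
  gcount R D mu r = \sum_(l : 'I_R | l %% D == r) Pplus R mu l.
Proof.
move=> hR R0; rewrite /gcount.
rewrite (card_part _ _ _ (fun A : {set 'I_R} => Ordinal (ltn_pmod (ssum A) R0))).
rewrite [RHS]big_mkcond /=; apply: eq_bigr => l _.
case: ifP => lr.
  rewrite /Pplus; apply: eq_card => A; rewrite !inE -(inj_eq val_inj) /= (modn_small (ltn_ord l)).
  case: (#|A| == mu) => //=; case: (boolP (ssum A %% R == l)) => e; rewrite ?andbF ?andbT //.
  by rewrite -(eqP lr) -(eqP e) (modn_dvdm _ hR); apply/eqP.
apply/eqP; rewrite cards_eq0; apply/eqP/setP => A; rewrite !inE -(inj_eq val_inj) /=.
apply/negP => /andP [/andP [_ /eqP sA] /eqP e].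
by rewrite -e -sA modn_dvdm // eqxx in lr.
Qed.

Lemma count_resI R D r c : 0 < D -> D %| R -> r < D ->
  \sum_(l : 'I_R | l %% D == r) c = R %/ D * c.
Proof.
move=> D0 hR rD; rewrite sum_nat_const; congr (_ * _).
rewrite -sum1_card big_mkcond /=.
rewrite (eq_bigr (fun l : 'I_R => (l %% D == r : nat))); last by move=> l _; rewrite -topredE /=; change (eqn (l %% D) r) with (l %% D == r); case: (l %% D == r).
rewrite -(big_mkord (fun _ => true) (fun i => (i %% D == r : nat))).
by rewrite -{1}(divnK hR) (count_res D (R %/ D) r rD).
Qed.


Lemma moreover_lem R mu : 1 < R -> two_orbits R mu -> prime (gcdn R mu) ->
  forall lam : 'I_R,
      ((gcdn R mu %| lam) -> Pplus R mu lam = Pplus R mu 0) /\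
      (~~ (gcdn R mu %| lam) -> Pplus R mu lam = Pplus R mu 1).
Proof.
move=> R1 horb pD lam.
have R0 : 0 < R by apply: ltnW.
pose o0 : 'I_R := Ordinal R0.
pose o1 : 'I_R := Ordinal R1.
have both : forall a b : 'I_R, (gcdn R mu %| a) = (gcdn R mu %| b) ->
    Pplus R mu a = Pplus R mu b.
  move=> a b e; apply/eqP; rewrite eqn_leq; apply/andP; split; apply: Pplus_G.
    by apply/horb.
  by apply/horb.
split=> h.
  by have := both lam o0; rewrite /= dvdn0 h => ->.
have := both lam o1; rewrite /= (negbTE h) => -> //.
apply/esym/negbTE; rewrite dvdn1; apply/eqP => e; by rewrite e in pD.
Qed.

Lemma key R mu : 0 < mu -> mu < R -> prime (gcdn R mu) -> two_orbits R mu ->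
  exists E,
  [/\ R %/ gcdn R mu * Pplus R mu 0 =
        E + ((mu %/ gcdn R mu * 'C(gcdn R mu, 2)) %% gcdn R mu == 0) * 'C(R %/ gcdn R mu, mu %/ gcdn R mu),
      R %/ gcdn R mu * Pplus R mu 1 =
        E + ((mu %/ gcdn R mu * 'C(gcdn R mu, 2)) %% gcdn R mu == 1) * 'C(R %/ gcdn R mu, mu %/ gcdn R mu)
    & gcdn R mu * E + 'C(R %/ gcdn R mu, mu %/ gcdn R mu) = 'C(R, mu)].
Proof.
move=> mu0 muR pD horb.
set D := gcdn R mu in pD *.
have D0 : 0 < D by apply: prime_gt0.
have D1 : 1 < D by apply: prime_gt1.
have hR : D %| R by apply: dvdn_gcdl.
have hmu : D %| mu by apply: dvdn_gcdr.
have R1 : 1 < R by apply: leq_ltn_trans muR.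
have R0 : 0 < R by apply: ltnW.
set r0 := (mu %/ D * 'C(D, 2)) %% D.
have r0D : r0 < D by rewrite ltn_mod.
exists #|Nset R D mu 0|.
have NE : forall r, r < D -> #|Nset R D mu r| = #|Nset R D mu 0|.
  move=> r rD; apply/eqP; rewrite eqn_leq !N_le //.
have gE : forall r, r < D -> gcount R D mu r = #|Nset R D mu 0| + (r0 == r) * 'C(R %/ D, mu %/ D).
  by move=> r rD; rewrite g_split // NE // card_Fall // eq_sym.
have mo := moreover_lem R mu R1 horb pD.
split.
- rewrite -(gE 0 D0) (g_via_P R D mu 0 hR R0).
  rewrite (eq_bigr (fun _ => Pplus R mu 0)); first by rewrite count_resI.
  by move=> l h; apply: (proj1 (mo l)); rewrite /dvdn h.
- rewrite -(gE 1 D1) (g_via_P R D mu 1 hR R0).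
  rewrite (eq_bigr (fun _ => Pplus R mu 1)); first by rewrite count_resI.
  move=> l /eqP h; apply: (proj2 (mo l)); rewrite /dvdn h.
  by [].
- rewrite -(g_total R D mu D0) (eq_bigr _ (fun (r : 'I_D) _ => gE r (ltn_ord r))).
  rewrite big_split /= sum_nat_const card_ord; congr (_ + _).
  rewrite (bigD1 (Ordinal r0D)) //= eqxx mul1n big1 ?addn0 // => i /negbTE ne.
  have : (r0 == i) = false.
    by apply/negbTE; apply/negP => /eqP e; move: ne; rewrite -(inj_eq val_inj) /= e eqxx.
  by move->.
Qed.

Local Open Scope ring_scope.

Lemma case_i R mu (E : nat) : (mu < R)%N -> prime (gcdn R mu) ->
  (R %/ gcdn R mu * Pplus R mu 0 =
        E + ((mu %/ gcdn R mu * 'C(gcdn R mu, 2)) %% gcdn R mu == 0) * 'C(R %/ gcdn R mu, mu %/ gcdn R mu))%N ->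
  (R %/ gcdn R mu * Pplus R mu 1 =
        E + ((mu %/ gcdn R mu * 'C(gcdn R mu, 2)) %% gcdn R mu == 1) * 'C(R %/ gcdn R mu, mu %/ gcdn R mu))%N ->
  (gcdn R mu * E + 'C(R %/ gcdn R mu, mu %/ gcdn R mu) = 'C(R, mu))%N ->
  (exists t, R = 3 * t)%N -> (6 <= R)%N -> mu = 3%N ->
      ((Pplus R mu 0)%:R : rat) = 3^-1 * ('C(R.-1, 2)%:R - 1) + 1 /\
      ((Pplus R mu 1)%:R : rat) = 3^-1 * ('C(R.-1, 2)%:R - 1).
Proof.
move=> muR pD h0 h1 ht H0 H1 H2.
have hD : gcdn R mu = 3%N.
  have : gcdn R mu \in primes 3 by rewrite mem_primes pD /= H2 dvdn_gcdr.
  by rewrite (_ : primes 3 = [:: 3]) // inE => /eqP.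
have hdvd : (3 %| R)%N by rewrite -hD dvdn_gcdl.
rewrite hD H2 /= in h0 h1 ht muR; rewrite H2.
set s := (R %/ 3)%N in h0 h1 ht *.
have eR : R = (3 * s)%N by rewrite /s mulnC divnK.
have s0 : (0 < s)%N by move: muR; rewrite eR; clear; lia.
have hcR := mul_bin_diag R 2.
have hcs := mul_bin_diag s 0.
set c := 'C(R.-1, 2) in hcR *.
set C := 'C(R, 3) in hcR ht.
set k := 'C(s.-1, 0) in hcs *.
set K := 'C(s, 1) in hcs h0 h1 ht.
rewrite /k bin0 in hcs.
move: h0 h1 ht hcR hcs.
move=> /(congr1 (fun n => n%:R : rat)) h0 /(congr1 (fun n => n%:R : rat)) h1
       /(congr1 (fun n => n%:R : rat)) ht /(congr1 (fun n => n%:R : rat)) hcR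
       /(congr1 (fun n => n%:R : rat)) hcs.
rewrite !natrD !natrM /= in h0 h1 ht hcR hcs.

have eRr : (R%:R : rat) = 3%:R * s%:R by rewrite {1}eR natrM.
rewrite eRr in hcR *.
have sn0 : (s%:R : rat) != 0 by rewrite pnatr_eq0 -lt0n.
split; apply: (mulfI sn0); [rewrite h0 | rewrite h1]; lra.
Qed.

Lemma case_ii R mu (E : nat) : (mu < R)%N -> prime (gcdn R mu) ->
  (R %/ gcdn R mu * Pplus R mu 0 =
        E + ((mu %/ gcdn R mu * 'C(gcdn R mu, 2)) %% gcdn R mu == 0) * 'C(R %/ gcdn R mu, mu %/ gcdn R mu))%N ->
  (R %/ gcdn R mu * Pplus R mu 1 =
        E + ((mu %/ gcdn R mu * 'C(gcdn R mu, 2)) %% gcdn R mu == 1) * 'C(R %/ gcdn R mu, mu %/ gcdn R mu))%N ->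
  (gcdn R mu * E + 'C(R %/ gcdn R mu, mu %/ gcdn R mu) = 'C(R, mu))%N ->
  (exists t, R = 4 * t + 2)%N -> (6 <= R)%N -> mu = 4%N ->
      ((Pplus R mu 0)%:R : rat) = 4^-1 * ('C(R.-1, 3)%:R + (R%:R - 2) / 2) /\
      ((Pplus R mu 1)%:R : rat) = 4^-1 * ('C(R.-1, 3)%:R - (R%:R - 2) / 2).
Proof.
move=> muR pD h0 h1 ht H0 H1 H2.
have hD : gcdn R mu = 2%N.
  have : gcdn R mu \in primes 4 by rewrite mem_primes pD /= H2 dvdn_gcdr.
  by rewrite (_ : primes 4 = [:: 2]) // inE => /eqP.
have hdvd : (2 %| R)%N by rewrite -hD dvdn_gcdl.
rewrite hD H2 /= in h0 h1 ht muR; rewrite H2.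
set s := (R %/ 2)%N in h0 h1 ht *.
have eR : R = (2 * s)%N by rewrite /s mulnC divnK.
have s0 : (0 < s)%N by move: muR; rewrite eR; clear; lia.
have hcR := mul_bin_diag R 3.
have hcs := mul_bin_diag s 1.
set c := 'C(R.-1, 3) in hcR *.
set C := 'C(R, 4) in hcR ht.
set k := 'C(s.-1, 1) in hcs *.
set K := 'C(s, 2) in hcs h0 h1 ht.
rewrite /k bin1 in hcs.
have hs1 : ((s.-1)%:R : rat) = s%:R - 1 by rewrite -{2}(prednK s0) -addn1 natrD addrK.
move: h0 h1 ht hcR hcs.
move=> /(congr1 (fun n => n%:R : rat)) h0 /(congr1 (fun n => n%:R : rat)) h1
       /(congr1 (fun n => n%:R : rat)) ht /(congr1 (fun n => n%:R : rat)) hcR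
       /(congr1 (fun n => n%:R : rat)) hcs.
rewrite !natrD !natrM /= in h0 h1 ht hcR hcs.
rewrite ?hs1 in hcs.
have eRr : (R%:R : rat) = 2%:R * s%:R by rewrite {1}eR natrM.
rewrite eRr in hcR *.
have sn0 : (s%:R : rat) != 0 by rewrite pnatr_eq0 -lt0n.
split; apply: (mulfI sn0); [rewrite h0 | rewrite h1]; lra.
Qed.

Lemma case_iii R mu (E : nat) : (mu < R)%N -> prime (gcdn R mu) ->
  (R %/ gcdn R mu * Pplus R mu 0 =
        E + ((mu %/ gcdn R mu * 'C(gcdn R mu, 2)) %% gcdn R mu == 0) * 'C(R %/ gcdn R mu, mu %/ gcdn R mu))%N ->
  (R %/ gcdn R mu * Pplus R mu 1 =
        E + ((mu %/ gcdn R mu * 'C(gcdn R mu, 2)) %% gcdn R mu == 1) * 'C(R %/ gcdn R mu, mu %/ gcdn R mu))%N ->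
  (gcdn R mu * E + 'C(R %/ gcdn R mu, mu %/ gcdn R mu) = 'C(R, mu))%N ->
  (exists t, R = 5 * t)%N -> (10 <= R)%N -> mu = 5%N ->
      ((Pplus R mu 0)%:R : rat) = 5^-1 * ('C(R.-1, 4)%:R - 1) + 1 /\
      ((Pplus R mu 1)%:R : rat) = 5^-1 * ('C(R.-1, 4)%:R - 1).
Proof.
move=> muR pD h0 h1 ht H0 H1 H2.
have hD : gcdn R mu = 5%N.
  have : gcdn R mu \in primes 5 by rewrite mem_primes pD /= H2 dvdn_gcdr.
  by rewrite (_ : primes 5 = [:: 5]) // inE => /eqP.
have hdvd : (5 %| R)%N by rewrite -hD dvdn_gcdl.
rewrite hD H2 /= in h0 h1 ht muR; rewrite H2.
set s := (R %/ 5)%N in h0 h1 ht *.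
have eR : R = (5 * s)%N by rewrite /s mulnC divnK.
have s0 : (0 < s)%N by move: muR; rewrite eR; clear; lia.
have hcR := mul_bin_diag R 4.
have hcs := mul_bin_diag s 0.
set c := 'C(R.-1, 4) in hcR *.
set C := 'C(R, 5) in hcR ht.
set k := 'C(s.-1, 0) in hcs *.
set K := 'C(s, 1) in hcs h0 h1 ht.
rewrite /k bin0 in hcs.
move: h0 h1 ht hcR hcs.
move=> /(congr1 (fun n => n%:R : rat)) h0 /(congr1 (fun n => n%:R : rat)) h1
       /(congr1 (fun n => n%:R : rat)) ht /(congr1 (fun n => n%:R : rat)) hcR
       /(congr1 (fun n => n%:R : rat)) hcs.
rewrite !natrD !natrM /= in h0 h1 ht hcR hcs.

have eRr : (R%:R : rat) = 5%:R * s%:R by rewrite {1}eR natrM.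
rewrite eRr in hcR *.
have sn0 : (s%:R : rat) != 0 by rewrite pnatr_eq0 -lt0n.
split; apply: (mulfI sn0); [rewrite h0 | rewrite h1]; lra.
Qed.

Lemma case_iv R mu (E : nat) : (mu < R)%N -> prime (gcdn R mu) ->
  (R %/ gcdn R mu * Pplus R mu 0 =
        E + ((mu %/ gcdn R mu * 'C(gcdn R mu, 2)) %% gcdn R mu == 0) * 'C(R %/ gcdn R mu, mu %/ gcdn R mu))%N ->
  (R %/ gcdn R mu * Pplus R mu 1 =
        E + ((mu %/ gcdn R mu * 'C(gcdn R mu, 2)) %% gcdn R mu == 1) * 'C(R %/ gcdn R mu, mu %/ gcdn R mu))%N ->
  (gcdn R mu * E + 'C(R %/ gcdn R mu, mu %/ gcdn R mu) = 'C(R, mu))%N ->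
  (R = 2 %[mod 6] /\ (8 <= R)%N \/ R = 4 %[mod 6] /\ (10 <= R)%N) -> mu = 6%N ->
      ((Pplus R mu 0)%:R : rat) = 6^-1 * ('C(R.-1, 5)%:R - 'C((R %/ 2).-1, 2)%:R) /\
      ((Pplus R mu 1)%:R : rat) = 6^-1 * ('C(R.-1, 5)%:R + 'C((R %/ 2).-1, 2)%:R).
Proof.
move=> muR pD h0 h1 ht H0 H1.
have hD : gcdn R mu = 2%N.
  have : gcdn R mu \in primes 6 by rewrite mem_primes pD /= H1 dvdn_gcdr.
  rewrite (_ : primes 6 = [:: 2; 3]) // !inE => /orP [] /eqP e //.
  have := dvdn_gcdl R mu; rewrite e => hh.
  by move: hh H0 H1; clear; lia.
have hdvd : (2 %| R)%N by rewrite -hD dvdn_gcdl.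
rewrite hD H1 /= in h0 h1 ht muR; rewrite H1.
set s := (R %/ 2)%N in h0 h1 ht *.
have eR : R = (2 * s)%N by rewrite /s mulnC divnK.
have s0 : (0 < s)%N by move: muR; rewrite eR; clear; lia.
have hcR := mul_bin_diag R 5.
have hcs := mul_bin_diag s 2.
set c := 'C(R.-1, 5) in hcR *.
set C := 'C(R, 6) in hcR ht.
set k := 'C(s.-1, 2) in hcs *.
set K := 'C(s, 3) in hcs h0 h1 ht.

move: h0 h1 ht hcR hcs.
move=> /(congr1 (fun n => n%:R : rat)) h0 /(congr1 (fun n => n%:R : rat)) h1
       /(congr1 (fun n => n%:R : rat)) ht /(congr1 (fun n => n%:R : rat)) hcR
       /(congr1 (fun n => n%:R : rat)) hcs.
rewrite !natrD !natrM /= in h0 h1 ht hcR hcs.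

have eRr : (R%:R : rat) = 2%:R * s%:R by rewrite {1}eR natrM.
rewrite eRr in hcR *.
have sn0 : (s%:R : rat) != 0 by rewrite pnatr_eq0 -lt0n.
split; apply: (mulfI sn0); [rewrite h0 | rewrite h1]; lra.
Qed.

Lemma case_v R mu (E : nat) : (mu < R)%N -> prime (gcdn R mu) ->
  (R %/ gcdn R mu * Pplus R mu 0 =
        E + ((mu %/ gcdn R mu * 'C(gcdn R mu, 2)) %% gcdn R mu == 0) * 'C(R %/ gcdn R mu, mu %/ gcdn R mu))%N ->
  (R %/ gcdn R mu * Pplus R mu 1 =
        E + ((mu %/ gcdn R mu * 'C(gcdn R mu, 2)) %% gcdn R mu == 1) * 'C(R %/ gcdn R mu, mu %/ gcdn R mu))%N ->
  (gcdn R mu * E + 'C(R %/ gcdn R mu, mu %/ gcdn R mu) = 'C(R, mu))%N ->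
  (exists t, R = 6 * t + 3)%N -> (9 <= R)%N -> mu = 6%N ->
      ((Pplus R mu 0)%:R : rat) = 3^-1 * (2^-1 * 'C(R.-1, 5)%:R + (R%:R - 3) / 3) /\
      ((Pplus R mu 1)%:R : rat) = 6^-1 * ('C(R.-1, 5)%:R - (R%:R - 3) / 3).
Proof.
move=> muR pD h0 h1 ht H0 H1 H2.
have hD : gcdn R mu = 3%N.
  have : gcdn R mu \in primes 6 by rewrite mem_primes pD /= H2 dvdn_gcdr.
  rewrite (_ : primes 6 = [:: 2; 3]) // !inE => /orP [] /eqP e //.
  have := dvdn_gcdl R mu; rewrite e => hh.
  by case: H0 => tt Ht; move: hh Ht; clear; lia.
have hdvd : (3 %| R)%N by rewrite -hD dvdn_gcdl.
rewrite hD H2 /= in h0 h1 ht muR; rewrite H2.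
set s := (R %/ 3)%N in h0 h1 ht *.
have eR : R = (3 * s)%N by rewrite /s mulnC divnK.
have s0 : (0 < s)%N by move: muR; rewrite eR; clear; lia.
have hcR := mul_bin_diag R 5.
have hcs := mul_bin_diag s 1.
set c := 'C(R.-1, 5) in hcR *.
set C := 'C(R, 6) in hcR ht.
set k := 'C(s.-1, 1) in hcs *.
set K := 'C(s, 2) in hcs h0 h1 ht.
rewrite /k bin1 in hcs.
have hs1 : ((s.-1)%:R : rat) = s%:R - 1 by rewrite -{2}(prednK s0) -addn1 natrD addrK.
move: h0 h1 ht hcR hcs.
move=> /(congr1 (fun n => n%:R : rat)) h0 /(congr1 (fun n => n%:R : rat)) h1
       /(congr1 (fun n => n%:R : rat)) ht /(congr1 (fun n => n%:R : rat)) hcR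
       /(congr1 (fun n => n%:R : rat)) hcs.
rewrite !natrD !natrM /= in h0 h1 ht hcR hcs.
rewrite ?hs1 in hcs.
have eRr : (R%:R : rat) = 3%:R * s%:R by rewrite {1}eR natrM.
rewrite eRr in hcR *.
have sn0 : (s%:R : rat) != 0 by rewrite pnatr_eq0 -lt0n.
split; apply: (mulfI sn0); [rewrite h0 | rewrite h1]; lra.
Qed.

Lemma case_vi R mu (E : nat) : (mu < R)%N -> prime (gcdn R mu) ->
  (R %/ gcdn R mu * Pplus R mu 0 =
        E + ((mu %/ gcdn R mu * 'C(gcdn R mu, 2)) %% gcdn R mu == 0) * 'C(R %/ gcdn R mu, mu %/ gcdn R mu))%N ->
  (R %/ gcdn R mu * Pplus R mu 1 =
        E + ((mu %/ gcdn R mu * 'C(gcdn R mu, 2)) %% gcdn R mu == 1) * 'C(R %/ gcdn R mu, mu %/ gcdn R mu))%N ->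
  (gcdn R mu * E + 'C(R %/ gcdn R mu, mu %/ gcdn R mu) = 'C(R, mu))%N ->
  (exists t, R = 7 * t)%N -> (14 <= R)%N -> mu = 7%N ->
      ((Pplus R mu 0)%:R : rat) = 7^-1 * ('C(R.-1, 6)%:R - 1) + 1 /\
      ((Pplus R mu 1)%:R : rat) = 7^-1 * ('C(R.-1, 6)%:R - 1).
Proof.
move=> muR pD h0 h1 ht H0 H1 H2.
have hD : gcdn R mu = 7%N.
  have : gcdn R mu \in primes 7 by rewrite mem_primes pD /= H2 dvdn_gcdr.
  by rewrite (_ : primes 7 = [:: 7]) // inE => /eqP.
have hdvd : (7 %| R)%N by rewrite -hD dvdn_gcdl.
rewrite hD H2 /= in h0 h1 ht muR; rewrite H2.
set s := (R %/ 7)%N in h0 h1 ht *.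
have eR : R = (7 * s)%N by rewrite /s mulnC divnK.
have s0 : (0 < s)%N by move: muR; rewrite eR; clear; lia.
have hcR := mul_bin_diag R 6.
have hcs := mul_bin_diag s 0.
set c := 'C(R.-1, 6) in hcR *.
set C := 'C(R, 7) in hcR ht.
set k := 'C(s.-1, 0) in hcs *.
set K := 'C(s, 1) in hcs h0 h1 ht.
rewrite /k bin0 in hcs.
move: h0 h1 ht hcR hcs.
move=> /(congr1 (fun n => n%:R : rat)) h0 /(congr1 (fun n => n%:R : rat)) h1
       /(congr1 (fun n => n%:R : rat)) ht /(congr1 (fun n => n%:R : rat)) hcR
       /(congr1 (fun n => n%:R : rat)) hcs.
rewrite !natrD !natrM /= in h0 h1 ht hcR hcs.

have eRr : (R%:R : rat) = 7%:R * s%:R by rewrite {1}eR natrM.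
rewrite eRr in hcR *.
have sn0 : (s%:R : rat) != 0 by rewrite pnatr_eq0 -lt0n.
split; apply: (mulfI sn0); [rewrite h0 | rewrite h1]; lra.
Qed.

Lemma case_vii R mu (E : nat) : (mu < R)%N -> prime (gcdn R mu) ->
  (R %/ gcdn R mu * Pplus R mu 0 =
        E + ((mu %/ gcdn R mu * 'C(gcdn R mu, 2)) %% gcdn R mu == 0) * 'C(R %/ gcdn R mu, mu %/ gcdn R mu))%N ->
  (R %/ gcdn R mu * Pplus R mu 1 =
        E + ((mu %/ gcdn R mu * 'C(gcdn R mu, 2)) %% gcdn R mu == 1) * 'C(R %/ gcdn R mu, mu %/ gcdn R mu))%N ->
  (gcdn R mu * E + 'C(R %/ gcdn R mu, mu %/ gcdn R mu) = 'C(R, mu))%N ->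
  (exists t, R = 4 * t + 6)%N -> (10 <= R)%N -> mu = 8%N ->
      ((Pplus R mu 0)%:R : rat) = 8^-1 * ('C(R.-1, 7)%:R + 'C((R %/ 2).-1, 3)%:R) /\
      ((Pplus R mu 1)%:R : rat) = 8^-1 * ('C(R.-1, 7)%:R - 'C((R %/ 2).-1, 3)%:R).
Proof.
move=> muR pD h0 h1 ht H0 H1 H2.
have hD : gcdn R mu = 2%N.
  have : gcdn R mu \in primes 8 by rewrite mem_primes pD /= H2 dvdn_gcdr.
  by rewrite (_ : primes 8 = [:: 2]) // inE => /eqP.
have hdvd : (2 %| R)%N by rewrite -hD dvdn_gcdl.
rewrite hD H2 /= in h0 h1 ht muR; rewrite H2.
set s := (R %/ 2)%N in h0 h1 ht *.
have eR : R = (2 * s)%N by rewrite /s mulnC divnK.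
have s0 : (0 < s)%N by move: muR; rewrite eR; clear; lia.
have hcR := mul_bin_diag R 7.
have hcs := mul_bin_diag s 3.
set c := 'C(R.-1, 7) in hcR *.
set C := 'C(R, 8) in hcR ht.
set k := 'C(s.-1, 3) in hcs *.
set K := 'C(s, 4) in hcs h0 h1 ht.

move: h0 h1 ht hcR hcs.
move=> /(congr1 (fun n => n%:R : rat)) h0 /(congr1 (fun n => n%:R : rat)) h1
       /(congr1 (fun n => n%:R : rat)) ht /(congr1 (fun n => n%:R : rat)) hcR
       /(congr1 (fun n => n%:R : rat)) hcs.
rewrite !natrD !natrM /= in h0 h1 ht hcR hcs.

have eRr : (R%:R : rat) = 2%:R * s%:R by rewrite {1}eR natrM.
rewrite eRr in hcR *.
have sn0 : (s%:R : rat) != 0 by rewrite pnatr_eq0 -lt0n.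
split; apply: (mulfI sn0); [rewrite h0 | rewrite h1]; lra.
Qed.

Lemma case_viii R mu (E : nat) : (mu < R)%N -> prime (gcdn R mu) ->
  (R %/ gcdn R mu * Pplus R mu 0 =
        E + ((mu %/ gcdn R mu * 'C(gcdn R mu, 2)) %% gcdn R mu == 0) * 'C(R %/ gcdn R mu, mu %/ gcdn R mu))%N ->
  (R %/ gcdn R mu * Pplus R mu 1 =
        E + ((mu %/ gcdn R mu * 'C(gcdn R mu, 2)) %% gcdn R mu == 1) * 'C(R %/ gcdn R mu, mu %/ gcdn R mu))%N ->
  (gcdn R mu * E + 'C(R %/ gcdn R mu, mu %/ gcdn R mu) = 'C(R, mu))%N ->
  ((exists t, R = 9 * t + 3)%N /\ (12 <= R)%N \/
     (exists t, R = 9 * t + 6)%N /\ (15 <= R)%N) -> mu = 9%N ->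
      ((Pplus R mu 0)%:R : rat) = 9^-1 * ('C(R.-1, 8)%:R + 2 * 'C((R %/ 3).-1, 2)%:R) /\
      ((Pplus R mu 1)%:R : rat) = 9^-1 * ('C(R.-1, 8)%:R - 'C((R %/ 3).-1, 2)%:R).
Proof.
move=> muR pD h0 h1 ht H0 H1.
have hD : gcdn R mu = 3%N.
  have : gcdn R mu \in primes 9 by rewrite mem_primes pD /= H1 dvdn_gcdr.
  by rewrite (_ : primes 9 = [:: 3]) // inE => /eqP.
have hdvd : (3 %| R)%N by rewrite -hD dvdn_gcdl.
rewrite hD H1 /= in h0 h1 ht muR; rewrite H1.
set s := (R %/ 3)%N in h0 h1 ht *.
have eR : R = (3 * s)%N by rewrite /s mulnC divnK.
have s0 : (0 < s)%N by move: muR; rewrite eR; clear; lia.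
have hcR := mul_bin_diag R 8.
have hcs := mul_bin_diag s 2.
set c := 'C(R.-1, 8) in hcR *.
set C := 'C(R, 9) in hcR ht.
set k := 'C(s.-1, 2) in hcs *.
set K := 'C(s, 3) in hcs h0 h1 ht.

move: h0 h1 ht hcR hcs.
move=> /(congr1 (fun n => n%:R : rat)) h0 /(congr1 (fun n => n%:R : rat)) h1
       /(congr1 (fun n => n%:R : rat)) ht /(congr1 (fun n => n%:R : rat)) hcR
       /(congr1 (fun n => n%:R : rat)) hcs.
rewrite !natrD !natrM /= in h0 h1 ht hcR hcs.

have eRr : (R%:R : rat) = 3%:R * s%:R by rewrite {1}eR natrM.
rewrite eRr in hcR *.
have sn0 : (s%:R : rat) != 0 by rewrite pnatr_eq0 -lt0n.
split; apply: (mulfI sn0); [rewrite h0 | rewrite h1]; lra.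
Qed.

Theorem theorem4p11 (R mu : nat) (hmu0 : (0 < mu)%N) (hmuR : (mu < R)%N)
  (hDprime : prime (gcdn R mu)) (horb : two_orbits R mu) :
  let D := gcdn R mu in
  let P (n : nat) : rat := (Pplus R mu n)%:R in
   (* (i) *)
   ((exists t, R = 3 * t)%N -> (6 <= R)%N -> mu = 3%N ->
      P 0%N = 3^-1 * ('C(R.-1, 2)%:R - 1) + 1 /\
      P 1%N = 3^-1 * ('C(R.-1, 2)%:R - 1)) /\
   (* (ii) *)
   ((exists t, R = 4 * t + 2)%N -> (6 <= R)%N -> mu = 4%N ->
      P 0%N = 4^-1 * ('C(R.-1, 3)%:R + (R%:R - 2) / 2) /\
      P 1%N = 4^-1 * ('C(R.-1, 3)%:R - (R%:R - 2) / 2)) /\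
   (* (iii) *)
   ((exists t, R = 5 * t)%N -> (10 <= R)%N -> mu = 5%N ->
      P 0%N = 5^-1 * ('C(R.-1, 4)%:R - 1) + 1 /\
      P 1%N = 5^-1 * ('C(R.-1, 4)%:R - 1)) /\
   (* (iv) *)
   ((R = 2 %[mod 6] /\ (8 <= R)%N \/ R = 4 %[mod 6] /\ (10 <= R)%N) ->
      mu = 6%N ->
      P 0%N = 6^-1 * ('C(R.-1, 5)%:R - 'C((R %/ 2).-1, 2)%:R) /\
      P 1%N = 6^-1 * ('C(R.-1, 5)%:R + 'C((R %/ 2).-1, 2)%:R)) /\
   (* (v) *)
   ((exists t, R = 6 * t + 3)%N -> (9 <= R)%N -> mu = 6%N ->
      P 0%N = 3^-1 * (2^-1 * 'C(R.-1, 5)%:R + (R%:R - 3) / 3) /\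
      P 1%N = 6^-1 * ('C(R.-1, 5)%:R - (R%:R - 3) / 3)) /\
   (* (vi) *)
   ((exists t, R = 7 * t)%N -> (14 <= R)%N -> mu = 7%N ->
      P 0%N = 7^-1 * ('C(R.-1, 6)%:R - 1) + 1 /\
      P 1%N = 7^-1 * ('C(R.-1, 6)%:R - 1)) /\
   (* (vii) *)
   ((exists t, R = 4 * t + 6)%N -> (10 <= R)%N -> mu = 8%N ->
      P 0%N = 8^-1 * ('C(R.-1, 7)%:R + 'C((R %/ 2).-1, 3)%:R) /\
      P 1%N = 8^-1 * ('C(R.-1, 7)%:R - 'C((R %/ 2).-1, 3)%:R)) /\
   (* (viii) *)
   (((exists t, R = 9 * t + 3)%N /\ (12 <= R)%N \/
     (exists t, R = 9 * t + 6)%N /\ (15 <= R)%N) -> mu = 9%N ->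
      P 0%N = 9^-1 * ('C(R.-1, 8)%:R + 2 * 'C((R %/ 3).-1, 2)%:R) /\
      P 1%N = 9^-1 * ('C(R.-1, 8)%:R - 'C((R %/ 3).-1, 2)%:R)) /\
   (* moreover *)
   (forall lam : 'I_R,
      ((D %| lam)%N -> Pplus R mu lam = Pplus R mu 0) /\
      (~~ (D %| lam)%N -> Pplus R mu lam = Pplus R mu 1)).

Proof.
move=> D P.
have R1 : (1 < R)%N by apply: leq_ltn_trans hmuR.
have [E [h0 h1 ht]] := key R mu hmu0 hmuR hDprime horb.
have mo := moreover_lem R mu R1 horb hDprime.
split; first exact: (case_i R mu E hmuR hDprime h0 h1 ht).
split; first exact: (case_ii R mu E hmuR hDprime h0 h1 ht).
split; first exact: (case_iii R mu E hmuR hDprime h0 h1 ht).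
split; first exact: (case_iv R mu E hmuR hDprime h0 h1 ht).
split; first exact: (case_v R mu E hmuR hDprime h0 h1 ht).
split; first exact: (case_vi R mu E hmuR hDprime h0 h1 ht).
split; first exact: (case_vii R mu E hmuR hDprime h0 h1 ht).
split; first exact: (case_viii R mu E hmuR hDprime h0 h1 ht).
exact: mo.
Qed.
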